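(* Let $n\ge2$, and let $U_0,U_1,\dots,U_T$ be any unitaries on $H$ (a quantum query algorithm with $T$ queries to the comparison oracle). For each permutation $\sigma$ of $\{0,\dots,n-1\}$ and $0\le t\le T$ let $|\psi_\sigma^t\rangle=U_tO_\sigma U_{t-1}O_\sigma\cdots U_1O_\sigma U_0|\vec0\rangle$ (with $t$ oracle applications), and define $$s_t=\sum_{\sigma,\tau} w(\sigma,\tau)\,\bigl|\langle\psi^t_\sigma|\psi^t_\tau\rangle\bigr|,$$ the sum over all ordered pairs of permutations. Then $|s_{t+1}-s_t|\le 2\pi\, n!$ for all $0\le t\le T-1$.
   Context: For a permutation $\sigma$ of $\{0,\dots,n-1\}$, the comparison matrix $M_\sigma\in\{0,1\}^{n\times n}$ has $(M_\sigma)_{i,j}=1$ if $\sigma(i)\le\sigma(j)$ and $0$ otherwise. $H$ is the Hilbert space spanned by orthonormal vectors $|i,j,b,c\rangle$, $0\le i,j\le n-1$, $b\in\{0,1\}$, $c\in\{0,1\}^w$ for some fixed $w\ge0$, and $O_\sigma$ is the unitary $O_\sigma|i,j,b,c\rangle=|i,j,b\oplus(M_\sigma)_{i,j},c\rangle$. For integers $0\le k\le n-2$ and $1\le d\le n-k-1$, define $\sigma^{(k,d)}=(k+d,k+d-1,\dots,k)\circ\sigma$, where $(k+d,k+d-1,\dots,k)$ is the cyclic permutation sending $k+d\mapsto k+d-1\mapsto\cdots\mapsto k\mapsto k+d$. The weight is $w(\sigma,\tau)=1/d$ if $\tau=\sigma^{(k,d)}$ for some such $k,d$, and $w(\sigma,\tau)=0$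 otherwise. *)

(* Defs.v *)
From HB Require Import structures.
From mathcomp Require Import all_boot all_order all_algebra all_fingroup.
From mathcomp Require Import spectral.
From mathcomp Require Import complex.
From mathcomp Require Import reals trigo.
From mathcomp Require Import zify.

Set Implicit Arguments.
Unset Strict Implicit.
Unset Printing Implicit Defensive.

Import Order.TTheory GRing.Theory Num.Theory.
Local Open Scope ring_scope.

(* The cyclic permutation (k+d, k+d-1, ..., k) of {0,...,n-1}:              *)
(*   k+d |-> k+d-1 |-> ... |-> k |-> k+d, other points fixed.               *)
(* (Only meaningful when k + d < n; otherwise we return the identity.)      *)
Definition cyc_fun (n k d : nat) (j : 'I_n) : 'I_n :=
  if (k + d < n)%N then
    insubd j (if (k < j <= k + d)%N then j.-1 else if j == k :> nat then k + d else j)%N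
  else j.

Lemma cyc_fun_inj n k d : injective (@cyc_fun n k d).
Proof.
move=> x y; rewrite /cyc_fun; case: ifP => // hkd.
have hx := ltn_ord x; have hy := ltn_ord y.
have E : forall z : 'I_n, val (insubd z (if (k < z <= k + d)%N then z.-1
            else if z == k :> nat then k + d else z)%N) =
          (if (k < z <= k + d)%N then z.-1 else if z == k :> nat then k + d else z)%N.
  move=> z; have hz := ltn_ord z.
  have hm : ((if (k < z <= k + d) then z.-1 else if z == k :> nat then k + d else z) < n)%N.
    case: ifP => [/andP[h1 h2]|_]; first by lia.
    by case: ifP => _; lia.
  by rewrite val_insubd hm.
move=> /(congr1 val); rewrite !E => h; apply: val_inj => /=.
move: h; case ha: (k < x <= k + d)%N; case hb: (k < y <= k + d)%N;
  case: (x =P k :> nat) => ex; case: (y =P k :> nat) => ey; lia.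
Qed.

Definition cyc_perm (n k d : nat) : {perm 'I_n} := perm (@cyc_fun_inj n k d).

(* sigma^{(k,d)} = (k+d, ..., k) o sigma ; in MathComp (s * t) x = t (s x). *)
Definition sigma_kd (n k d : nat) (s : {perm 'I_n}) : {perm 'I_n} :=
  (s * cyc_perm n k d)%g.

Definition valid_kd (n k d : nat) : bool := (k <= n - 2)%N && (1 <= d <= n - k - 1)%N.

(* The weight w(sigma, tau): 1/d if tau = sigma^{(k,d)} for an admissible
   (k,d), and 0 otherwise.  (k and d are bounded by n, so we search over
   'I_n * 'I_n.)                                                            *)
Definition weight (C : numFieldType) (n : nat) (s t : {perm 'I_n}) : C :=
  match [pick kd : 'I_n * 'I_n | valid_kd n kd.1 kd.2 && (t == sigma_kd kd.1 kd.2 s)] with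
  | Some kd => (kd.2%:R)^-1
  | None => 0
  end.

(* The Hilbert space H, with orthonormal basis |i,j,b,c>.                   *)
Definition basis (n w : nat) : finType := ('I_n * 'I_n * bool * w.-tuple bool)%type.

Definition dimH (n w : nat) : nat := #|basis n w|.

Definition cmp (n : nat) (s : {perm 'I_n}) (i j : 'I_n) : bool := (s i <= s j)%N.

Definition oracle_basis (n w : nat) (s : {perm 'I_n}) (x : basis n w) : basis n w :=
  let: (i, j, b, c) := x in (i, j, b (+) cmp s i j, c).

Definition oracle (C : numFieldType) (n w : nat) (s : {perm 'I_n}) : 'M[C]_(dimH n w) :=
  \matrix_(p, q) (enum_val p == oracle_basis s (enum_val q))%:R.

Definition init (C : numFieldType) (n w : nat) : 'cV[C]_(dimH n w) :=
  \col_p (let: (i, j, b, c) := (enum_val p : basis n w) in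
          [&& val i == 0%N, val j == 0%N, ~~ b & all negb c])%:R.

Fixpoint psi (C : numFieldType) (n w : nat) (U : nat -> 'M[C]_(dimH n w))
    (s : {perm 'I_n}) (t : nat) : 'cV[C]_(dimH n w) :=
  match t with
  | 0 => U 0%N *m init C n w
  | t'.+1 => U t *m (oracle C w s *m psi U s t')
  end.

Definition inner (C : numClosedFieldType) (m : nat) (u v : 'cV[C]_m) : C :=
  \sum_p (u p 0)^* * v p 0.

Definition s_t (C : numClosedFieldType) (n w : nat) (U : nat -> 'M[C]_(dimH n w))
    (t : nat) : C :=
  \sum_(s : {perm 'I_n}) \sum_(r : {perm 'I_n})
     weight C s r * `| inner (psi U s t) (psi U r t) |.

(* Main.v *)
From Pilot Require Import Defs.
From HB Require Import structures.
From mathcomp Require Import all_boot all_order all_algebra all_fingroup.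
From mathcomp Require Import spectral complex reals trigo.
From mathcomp Require Import all_classical all_reals all_analysis.
From mathcomp Require Import zify ring lra.
Import Pilot.Defs.

Import Order.TTheory GRing.Theory Num.Theory numFieldNormedType.Exports numFieldTopology.Exports.
Set Implicit Arguments. Unset Strict Implicit. Unset Printing Implicit Defensive.
Local Open Scope ring_scope.
Local Open Scope complex_scope.
Import ComplexField.Normc.

Lemma atan_diff (R : realType) (x y : R) : 0 <= x <= y ->
  (y - x) / (1 + y ^+ 2) <= atan y - atan x.
Proof.
move=> /andP[x0 xy].
have cont : continuous (@atan R) by move=> z; apply: continuous_atan.
have [c /andP[cx cy] E] := @MVT_segment R atan (fun z => (1 + z ^+ 2)^-1) x y xy
  (fun z _ => is_derive1_atan z) (continuous_subspaceT cont).
rewrite E mulrC; apply: ler_wpM2r; first by rewrite subr_ge0.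
rewrite bnd_simp in cx cy.
rewrite lef_pV2 ?posrE ?ltr_pwDl ?sqr_ge0 // lerD2l.
by rewrite ler_sqr ?nnegrE // (le_trans x0).
Qed.

Definition hf (R : realType) (A : R) (g : nat) : R :=
  2 * Num.sqrt A / ((A + (2 * g + 1)%:R) * Num.sqrt (2 * g + 1)%:R).

Lemma hf_ge0 (R : realType) (A : R) g : 0 <= A -> 0 <= hf A g.
Proof.
move=> A0; rewrite /hf; apply: divr_ge0; first by rewrite mulr_ge0 ?sqrtr_ge0.
by rewrite mulr_ge0 ?sqrtr_ge0 ?addr_ge0.
Qed.

Lemma hf_step (R : realType) (A : R) (N : nat) : 0 < A ->
  hf A N <= 2 * (atan (Num.sqrt (2 * N + 1)%:R / Num.sqrt A)
                - atan (Num.sqrt ((2 * N).-1)%:R / Num.sqrt A)).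
Proof.
move=> A0.
set B : R := (2 * N + 1)%:R; set B' : R := ((2 * N).-1)%:R.
set sA := Num.sqrt A; set sB := Num.sqrt B; set sB' := Num.sqrt B'.
have sA0 : 0 < sA by rewrite sqrtr_gt0.
have B0 : 0 < B by rewrite ltr0n; lia.
have B'0 : 0 <= B' by rewrite ler0n.
have sB0 : 0 < sB by rewrite sqrtr_gt0.
have sB'0 : 0 <= sB' by rewrite sqrtr_ge0.
have sAA : sA ^+ 2 = A by rewrite sqr_sqrtr // ltW.
have sBB : sB ^+ 2 = B by rewrite sqr_sqrtr // ltW.
have sBB' : sB' ^+ 2 = B' by rewrite sqr_sqrtr.
have B1 : B - 1 = (2 * N)%:R by rewrite /B natrD addrK.
have key : sB * sB' <= B - 1.
  rewrite B1 /sB /sB' -sqrtrM ?ler0n // -[X in _ <= X]ger0_norm ?ler0n //.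
  rewrite -sqrtr_sqr ler_sqrt ?exprn_ge0 ?ler0n // /B /B' -natrM -natrX ler_nat.
  case: N {B B' sB sB' B0 B'0 sB0 sB'0 sBB sBB' B1} => [|N'] //=.
  nia.
have xy : 0 <= sB' / sA <= sB / sA.
  rewrite divr_ge0 ?(ltW sA0) //= ler_pM2r ?invr_gt0 //.
  rewrite -(ler_sqr sB'0 (ltW sB0)) sBB sBB' /B /B' ler_nat; lia.
apply: le_trans (ler_wpM2l _ (atan_diff xy)); last by [].
rewrite /hf -/B -/sA -/sB.
have AB0 : 0 < A + B by rewrite addr_gt0.
rewrite -mulrBl expr_div_n sBB.
have -> : 1 + B / sA ^+ 2 = (A + B) / A by rewrite sAA; field; rewrite gt_eqF.
rewrite -sAA.
have sAne : sA != 0 by rewrite gt_eqF.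
rewrite -sAA in AB0.
have sBne : sB != 0 by rewrite gt_eqF.
have ABne : sA ^+ 2 + B != 0 by rewrite gt_eqF.
have -> : 2 * sA / ((sA ^+ 2 + B) * sB) = (2 * sA / (sA ^+ 2 + B)) * sB^-1.
  by field; rewrite sBne /=; move: ABne; rewrite /B natrD natrM.
have -> : 2 * ((sB - sB') / sA / ((sA ^+ 2 + B) / sA ^+ 2)) =
     (2 * sA / (sA ^+ 2 + B)) * (sB - sB').
  by field; rewrite sAne andbT; move: ABne; rewrite /B natrD natrM.
rewrite ler_pM2l; last by rewrite divr_gt0 // ?mulr_gt0.
rewrite -(ler_pM2l sB0) mulfV // mulrBr -expr2 sBB.
by rewrite lerBrDl -lerBrDr.
Qed.

Lemma hf_sum_atan (R : realType) (A : R) (N : nat) : 0 < A ->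
  \sum_(g < N) hf A g <= 2 * atan (Num.sqrt ((2 * N).-1)%:R / Num.sqrt A).
Proof.
move=> A0; elim: N => [|N IH]; first by rewrite big_ord0 /= sqrtr0 mul0r atan0 mulr0.
rewrite big_ord_recr -[X in X <= _]/(\sum_(i < N) hf A i + hf A N).
have E : (2 * N.+1).-1 = (2 * N + 1)%N by lia.
rewrite E.
have := hf_step N A0 => h; lra.
Qed.

Lemma hf_sum (R : realType) (A : R) (N : nat) : 0 < A ->
  \sum_(g < N) hf A g <= pi.
Proof.
move=> A0; apply: le_trans (hf_sum_atan N A0) _.
have := atan_ltpi2 (Num.sqrt ((2 * N).-1)%:R / Num.sqrt A); lra.
Qed.

Lemma cyc_val n k d (j : 'I_n) : (k + d < n)%N ->
  val (cyc_perm n k d j) =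
  (if (k < j <= k + d)%N then j.-1 else if j == k :> nat then k + d else j)%N.
Proof.
move=> hkd; rewrite /cyc_perm permE /cyc_fun hkd val_insubd.
have hj := ltn_ord j.
rewrite ifT //.
case: ifP => [/andP [? ?]|?]; first lia.
case: ifP => [/eqP ?|?]; lia.
Qed.

Lemma cyc_flip_nat k d a b ca cb : (0 < d)%N ->
  ca = (if (k < a <= k + d)%N then a.-1 else if a == k then k + d else a)%N ->
  cb = (if (k < b <= k + d)%N then b.-1 else if b == k then k + d else b)%N ->
  (a <= b)%N != (ca <= cb)%N ->
  [/\ minn a b = k, (maxn a b <= k + d)%N, (k < maxn a b)%N,
      minn ca cb = (maxn a b).-1 & maxn ca cb = (k + d)%N].
Proof.
move=> d0 -> ->.
case: (boolP (k < a <= k + d)%N) => /= ha; case: (boolP (k < b <= k + d)%N) => /= hb;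
case: (a =P k) => ea; case: (b =P k) => eb; move=> /eqP hf;
  split; lia.
Qed.

Definition flipb n (s t : {perm 'I_n}) (ij : 'I_n * 'I_n) : bool :=
  cmp s ij.1 ij.2 != cmp t ij.1 ij.2.

Definition eg n (p : {perm 'I_n}) (ij : 'I_n * 'I_n) : nat :=
  (maxn (p ij.1) (p ij.2) - minn (p ij.1) (p ij.2)).-1.

Lemma eg_lt n p ij : (@eg n p ij < n)%N.
Proof. rewrite /eg; have := ltn_ord (p ij.1); have := ltn_ord (p ij.2); lia. Qed.

Lemma K_perm n k d (p : {perm 'I_n}) ij : valid_kd n k d ->
  flipb p (p * cyc_perm n k d)%g ij ->
  [/\ minn (p ij.1) (p ij.2) = k, (maxn (p ij.1) (p ij.2) <= k + d)%N,
      (k < maxn (p ij.1) (p ij.2))%N,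
      minn ((p * cyc_perm n k d)%g ij.1) ((p * cyc_perm n k d)%g ij.2) = (maxn (p ij.1) (p ij.2)).-1
    & maxn ((p * cyc_perm n k d)%g ij.1) ((p * cyc_perm n k d)%g ij.2) = (k + d)%N].
Proof.
move=> /andP[hk /andP[hd1 hd2]] hf.
have hkd : (k + d < n)%N by have := ltn_ord (p ij.1); lia.
apply: (@cyc_flip_nat k d (p ij.1) (p ij.2)); first by lia.
- by rewrite permM cyc_val.
- by rewrite permM cyc_val.
by move: hf; rewrite /flipb /cmp.
Qed.

Lemma e_sum n k d (p : {perm 'I_n}) ij : valid_kd n k d ->
  flipb p (p * cyc_perm n k d)%g ij ->
  (eg p ij + eg (p * cyc_perm n k d)%g ij).+1 = d.
Proof.
move=> hv hf; have [h1 h2 h3 h4 h5] := K_perm hv hf.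
rewrite /eg h4 h5 h1; move: h2 h3; set M := maxn _ _ => h2 h3; lia.
Qed.

Lemma e_C1 n k d (p : {perm 'I_n}) ij : valid_kd n k d ->
  flipb p (p * cyc_perm n k d)%g ij ->
  k = minn (p ij.1) (p ij.2) /\
  d = (eg (p * cyc_perm n k d)%g ij + maxn (p ij.1) (p ij.2) - k)%N.
Proof.
move=> hv hf; have [h1 h2 h3 h4 h5] := K_perm hv hf.
rewrite /eg h4 h5; lia.
Qed.

Lemma e_C2 n k d (p : {perm 'I_n}) ij : valid_kd n k d ->
  flipb (p * (cyc_perm n k d)^-1)%g p ij ->
  k = (minn (p ij.1) (p ij.2) - eg (p * (cyc_perm n k d)^-1)%g ij)%N /\
  d = (maxn (p ij.1) (p ij.2) - k)%N.
Proof.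
move=> hv hf.
have E : p = ((p * (cyc_perm n k d)^-1) * cyc_perm n k d)%g by rewrite mulgKV.
move: hf; rewrite {2}E => hf.
have [h1 h2 h3 h4 h5] := K_perm hv hf.
rewrite -E in h4 h5; rewrite /eg h4 h5 h1; move: h2 h3; set M := maxn _ _ => h2 h3; lia.
Qed.

Section Q.
Local Open Scope sesquilinear_scope.
Variables (R : realType) (n w : nat).
Local Notation C := R[i].
Local Notation N := (dimH n w).

Lemma oracle_basisK (s : {perm 'I_n}) : involutive (@oracle_basis n w s).
Proof. by move=> [[[i j] b] c] /=; rewrite -addbA addbb addbF. Qed.

Definition obas (s : {perm 'I_n}) (p : 'I_N) : 'I_N :=
  enum_rank (oracle_basis s (enum_val p)).

Lemma obasK s : involutive (obas s).
Proof. by move=> p; rewrite /obas enum_rankK oracle_basisK enum_valK. Qed.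

Lemma oracleE s (u : 'cV[C]_N) p : (oracle C w s *m u) p 0 = u (obas s p) 0.
Proof.
rewrite mxE (bigD1 (obas s p)) //= big1 ?addr0.
  by rewrite mxE /obas enum_rankK oracle_basisK eqxx mul1r.
move=> q hq; rewrite mxE.
case: eqP => [E|_]; last by rewrite mul0r.
by case/eqP: hq; rewrite /obas E oracle_basisK enum_valK.
Qed.

Lemma inner_oracle s t (u v : 'cV[C]_N) :
  inner (oracle C w s *m u) (oracle C w t *m v) =
  \sum_p (u p 0)^* * v (obas t (obas s p)) 0.
Proof.
rewrite /inner (reindex_inj (can_inj (obasK s))) /=.
by apply: eq_bigr => p _; rewrite !oracleE obasK.
Qed.

Lemma inner_oracle_same s (u v : 'cV[C]_N) :
  inner (oracle C w s *m u) (oracle C w s *m v) = inner u v.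
Proof. by rewrite inner_oracle; apply: eq_bigr => p _; rewrite obasK. Qed.


Definition ijof (p : 'I_N) : 'I_n * 'I_n := ((enum_val p).1.1.1, (enum_val p).1.1.2).

Lemma enum_val_h s t p : enum_val (obas t (obas s p)) =
  oracle_basis t (oracle_basis s (enum_val p)).
Proof. by rewrite /obas !enum_rankK. Qed.

Lemma ijof_h s t p : ijof (obas t (obas s p)) = ijof p.
Proof. by rewrite /ijof enum_val_h; case: (enum_val p) => [[[i j] b] c]. Qed.

Lemma h_noflip s t p : ~~ flipb s t (ijof p) -> obas t (obas s p) = p.
Proof.
rewrite /flipb /ijof negbK => /eqP E.
apply: enum_val_inj; rewrite enum_val_h.
move: E; case: (enum_val p) => [[[i j] b] c] /= ->.
by rewrite -addbA addbb addbF.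
Qed.

Lemma nrmE (z : C) : `|z| = (normc z)%:C.
Proof. by case: z => a b; rewrite normc_def. Qed.

Lemma normc_ge0 (z : C) : 0 <= normc z.
Proof. by case: z => a b /=; rewrite sqrtr_ge0. Qed.

Lemma normc_conj (z : C) : normc ((z^*)%R) = normc z.
Proof. by case: z => a b /=; rewrite sqrrN. Qed.

Lemma conj_mul_normc (z : C) : (z^*)%R * z = (normc z ^+ 2)%:C.
Proof. by rewrite mulrC -normCK nrmE rmorphXn. Qed.

Lemma normc_sum (I : finType) (P : pred I) (F : I -> C) :
  normc (\sum_(p | P p) F p) <= \sum_(p | P p) normc (F p).
Proof.
apply: (big_ind2 (fun x y => normc x <= y)); first by rewrite normc0.
  by move=> x1 x2 y1 y2 h1 h2; apply: le_trans (le_normcD _ _) (lerD h1 h2).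
by [].
Qed.

Lemma amgm (l a b : R) : 0 < l -> 0 <= a -> 0 <= b ->
  a * b <= (l * a ^+ 2 + b ^+ 2 / l) / 2.
Proof.
move=> l0 a0 b0.
have : 0 <= (l * a - b) ^+ 2 / l by rewrite divr_ge0 ?sqr_ge0 // ltW.
have -> : (l * a - b) ^+ 2 / l = l * a ^+ 2 - 2 * (a * b) + b ^+ 2 / l.
  by field; rewrite gt_eqF.
lra.
Qed.

Lemma D_bound s t (u v : 'cV[C]_N) (lam : 'I_n * 'I_n -> R) :
  (forall ij, 0 < lam ij) ->
  normc (inner (oracle C w s *m u) (oracle C w t *m v) - inner u v) <=
  \sum_p (flipb s t (ijof p))%:R *
     (lam (ijof p) * normc (u p 0) ^+ 2 + normc (v p 0) ^+ 2 / lam (ijof p)).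
Proof.
move=> lam0.
set h := fun p => obas t (obas s p).
rewrite inner_oracle /inner -sumrB.
apply: le_trans (normc_sum _ _) _.
pose F p := (flipb s t (ijof p))%:R *
  (lam (ijof p) * normc (u p 0) ^+ 2 + (normc (v (h p) 0) ^+ 2 + normc (v p 0) ^+ 2) / (2 * lam (ijof p))).
apply: (@le_trans _ _ (\sum_p F p)).
  apply: ler_sum => p _; rewrite -mulrBr normcM normc_conj /F.
  case: (boolP (flipb s t (ijof p))) => fl.
    rewrite mul1r.
    apply: le_trans (ler_wpM2l (normc_ge0 _) (le_normcD _ _)) _.
    rewrite normcN mulrDr.
    have l0 := lam0 (ijof p).
    have a1 := amgm l0 (normc_ge0 (u p 0)) (normc_ge0 (v (h p) 0)).
    have a2 := amgm l0 (normc_ge0 (u p 0)) (normc_ge0 (v p 0)).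
    have -> : (normc (v (h p) 0) ^+ 2 + normc (v p 0) ^+ 2) / (2 * lam (ijof p)) =
       (normc (v (h p) 0) ^+ 2 / lam (ijof p) + normc (v p 0) ^+ 2 / lam (ijof p)) / 2.
      by field; rewrite gt_eqF.
    lra.
  by rewrite /h h_noflip // subrr normc0 mulr0 mul0r.
rewrite /F.
have E : \sum_p (flipb s t (ijof p))%:R * (normc (v (h p) 0) ^+ 2 / (2 * lam (ijof p))) =
         \sum_p (flipb s t (ijof p))%:R * (normc (v p 0) ^+ 2 / (2 * lam (ijof p))).
  have hinj : injective h by move=> x y; rewrite /h => /(can_inj (obasK t)) /(can_inj (obasK s)).
  rewrite [RHS](reindex_inj hinj) /=.
  by apply: eq_bigr => p _; rewrite /h ijof_h.
apply: le_trans (_ : _ <= \sum_p ((flipb s t (ijof p))%:R * (lam (ijof p) * normc (u p 0) ^+ 2)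
   + (flipb s t (ijof p))%:R * (normc (v (h p) 0) ^+ 2 / (2 * lam (ijof p)))
   + (flipb s t (ijof p))%:R * (normc (v p 0) ^+ 2 / (2 * lam (ijof p))))) _.
  by apply: ler_sum => p _; rewrite !mulrDl !mulrDr !addrA.
rewrite !big_split /= E -addrA -big_split /= -big_split /=.
apply: ler_sum => p _.
rewrite -!mulrDr mulrDr.
have l0 := lam0 (ijof p).
have -> : normc (v p 0) ^+ 2 * ((2 * lam (ijof p))^-1 + (2 * lam (ijof p))^-1) =
   normc (v p 0) ^+ 2 / lam (ijof p) by field; rewrite gt_eqF.
by rewrite mulrDr.
Qed.


Lemma innerE m (x y : 'cV[C]_m) : inner x y = ((x ^t Num.Def.conjC) *m y) 0 0.
Proof. by rewrite /inner mxE; apply: eq_bigr => p _; rewrite !mxE. Qed.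

Lemma inner_unitary m (M : 'M[C]_m) (x y : 'cV[C]_m) : M \is unitarymx ->
  inner (M *m x) (M *m y) = inner x y.
Proof.
move=> /unitarymxP MU.
have MU' : (M ^t Num.Def.conjC) *m M = 1%:M by apply: mulmx1C.
rewrite !innerE trmx_mul map_mxM -!mulmxA (mulmxA (M ^t Num.Def.conjC)) MU' mul1mx.
by [].
Qed.

Lemma inner_self_normc m (x : 'cV[C]_m) :
  inner x x = (\sum_p normc (x p 0) ^+ 2)%:C.
Proof. by rewrite /inner rmorph_sum; apply: eq_bigr => p _; rewrite conj_mul_normc. Qed.


Lemma all_negb_nseq (c : seq bool) : all negb c -> c = nseq (size c) false.
Proof. by elim: c => [|b c IH] //= /andP[hb /IH <-]; case: b hb. Qed.

Lemma conj_bool (bb : bool) : ((bb%:R : C)^*)%R * bb%:R = bb%:R.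
Proof. by case: bb; rewrite /= ?mulr1n ?mulr0n ?conjC1 ?conjC0 ?mulr1 ?mulr0. Qed.

Lemma init_norm : (0 < n)%N -> inner (init C n w) (init C n w) = 1.
Proof.
move=> n0.
pose i0 : 'I_n := Ordinal n0.
pose x0 : basis n w := (i0, i0, false, nseq_tuple w false).
pose F (x : basis n w) : C := ([&& val x.1.1.1 == 0%N, val x.1.1.2 == 0%N, ~~ x.1.2 & all negb x.2])%:R.
have E : inner (init C n w) (init C n w) = \sum_(p : 'I_N) F (enum_val p).
  rewrite /inner; apply: eq_bigr => p _; rewrite !mxE /F.
  case: (enum_val p) => [[[i j] b] c] /=.
  by rewrite conj_bool.
rewrite E.
have -> : \sum_(p : 'I_N) F (enum_val p) = \sum_(x : basis n w) F x.
  rewrite (reindex (@enum_val (basis n w) (mem predT))) //=; exists enum_rank => x _; [exact: enum_valK | exact: enum_rankK].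
rewrite (bigD1 x0) //= big1 ?addr0.
  by rewrite /F /=; have -> : all negb (nseq w false) by elim: (w) => //=.
move=> [[[i j] b] c] /negP hx; rewrite /F /=.
case: (boolP [&& _, _, _ & _]) => //= /and4P[/eqP hi /eqP hj hb hc].
exfalso; apply: hx; apply/eqP.
have -> : i = i0 by apply: val_inj.
have -> : j = i0 by apply: val_inj.
have -> : b = false by case: b hb.
congr (_, _); apply: val_inj => /=.
by rewrite (all_negb_nseq hc) size_tuple.
Qed.

Lemma psi_norm (T : nat) (U : nat -> 'M[C]_N) s :
  (0 < n)%N -> (forall t, (t <= T)%N -> U t \is unitarymx) ->
  forall t, (t <= T)%N -> inner (psi U s t) (psi U s t) = 1.
Proof.
move=> n0 hU; elim => [|t IH] ht /=.
  by rewrite inner_unitary ?hU // init_norm.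
by rewrite inner_unitary ?hU // inner_oracle_same IH // ltnW.
Qed.

Lemma psi_sumsq (T : nat) (U : nat -> 'M[C]_N) s :
  (0 < n)%N -> (forall t, (t <= T)%N -> U t \is unitarymx) ->
  forall t, (t <= T)%N -> \sum_p normc (psi U s t p 0) ^+ 2 = 1.
Proof.
move=> n0 hU t ht; apply: complexI.
by rewrite -inner_self_normc (psi_norm s n0 hU ht).
Qed.

End Q.

Lemma weightC (R : realType) n (s t : {perm 'I_n}) :
  weight (R[i]) s t = (weight R s t)%:C.
Proof.
rewrite /weight; case: [pick _ | _] => [kd|] /=; last by rewrite rmorph0.
by rewrite fmorphV rmorph_nat.
Qed.

Lemma weight_ge0 (R : realType) n (s t : {perm 'I_n}) : 0 <= weight R s t.
Proof. by rewrite /weight; case: [pick _ | _] => [kd|] //=; rewrite invr_ge0 ler0n. Qed.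

Lemma weight_le (R : realType) n (s t : {perm 'I_n}) :
  weight R s t <= \sum_(kd : 'I_n * 'I_n | valid_kd n kd.1 kd.2 && (t == sigma_kd kd.1 kd.2 s))
     (kd.2%:R)^-1.
Proof.
rewrite /weight; case: pickP => [kd hkd|_].
  rewrite (bigD1 kd) //= lerDl.
  by apply: sumr_ge0 => x _; rewrite invr_ge0 ler0n.
by apply: sumr_ge0 => x _; rewrite invr_ge0 ler0n.
Qed.

Lemma sum_inj_le (R : realType) (T : finType) (P : pred T) (phi : T -> nat)
  (h : nat -> R) m : (forall g, 0 <= h g) -> {in P &, injective phi} ->
  (forall x, P x -> (phi x < m)%N) ->
  \sum_(x | P x) h (phi x) <= \sum_(g < m) h g.
Proof.
move=> h0 inj lt.
have E1 : \sum_(x | P x) h (phi x) = \sum_(g <- [seq phi x | x <- enum P]) h g.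
  by rewrite big_map big_enum; apply: eq_bigl.
set s := [seq phi x | x <- enum P] in E1.
have us : uniq s.
  rewrite map_inj_in_uniq ?enum_uniq // => x y; rewrite !mem_enum; exact: inj.
have E2 : \sum_(g < m) h g = \sum_(g <- iota 0 m) h g by rewrite -(big_mkord xpredT) /index_iota subn0.
rewrite E1 E2.
have Pe : perm_eq [seq g <- iota 0 m | g \in s] s.
  apply: uniq_perm; first by rewrite filter_uniq // iota_uniq.
    exact: us.
  move=> g; rewrite mem_filter mem_iota /= add0n.
  case: (boolP (g \in s)) => //= /mapP[x]; rewrite mem_enum => Px ->.
  by rewrite lt.
rewrite -(perm_big _ Pe) big_filter big_mkcond /=.
apply: ler_sum => g _; case: ifP => // _.
Qed.

Definition GG (R : realType) n (p : {perm 'I_n}) ij : R := (2 * eg p ij + 1)%:R.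

Lemma hf_eq (R : realType) (a b : nat) :
  ((a + b + 1)%:R : R)^-1 * (Num.sqrt (2 * a + 1)%:R / Num.sqrt (2 * b + 1)%:R) =
  hf ((2 * a + 1)%:R : R) b.
Proof.
rewrite /hf.
have E : ((2 * a + 1)%:R + (2 * b + 1)%:R : R) = 2 * (a + b + 1)%:R.
  by rewrite -natrD -[2]/(2%:R) -natrM; congr (_%:R); lia.
rewrite E.
have s0 : Num.sqrt ((2 * b + 1)%:R : R) != 0 by rewrite gt_eqF // sqrtr_gt0 ltr0n addn1.
have d0 : ((a + b + 1)%:R : R) != 0 by rewrite pnatr_eq0 addn1.
by field; rewrite s0 /=; move: d0; rewrite !natrD.
Qed.

Lemma pair_ord_inj n (x y : 'I_n * 'I_n) : (x.1 : nat) = y.1 -> (x.2 : nat) = y.2 -> x = y.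
Proof. by case: x y => [a b] [c d] /= /val_inj -> /val_inj ->. Qed.

Lemma wcoef1 (R : realType) n (s : {perm 'I_n}) ij :
  \sum_(kd : 'I_n * 'I_n | valid_kd n kd.1 kd.2 && flipb s (s * cyc_perm n kd.1 kd.2)%g ij)
     (kd.2%:R)^-1 * (Num.sqrt (GG R s ij) / Num.sqrt (GG R (s * cyc_perm n kd.1 kd.2)%g ij))
  <= pi.
Proof.
rewrite (eq_bigr (fun kd : 'I_n * 'I_n => hf (GG R s ij) (eg (s * cyc_perm n kd.1 kd.2)%g ij))); last first.
  move=> kd /andP[hv hf]; have E := e_sum hv hf.
  by rewrite -{1}E -hf_eq addn1.
have A0 : 0 < GG R s ij by rewrite /GG ltr0n addn1.
apply: le_trans (hf_sum n A0).
apply: sum_inj_le.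
- by move=> g; apply: hf_ge0; rewrite /GG ler0n.
- move=> x y /andP[hx fx] /andP[hy fy] E.
  have [k1 d1] := e_C1 hx fx; have [k2 d2] := e_C1 hy fy.
  apply: pair_ord_inj; first by rewrite k1 k2.
  by rewrite d1 d2 E k1 k2.
- by move=> x _; apply: eg_lt.
Qed.

Lemma wcoef2 (R : realType) n (s : {perm 'I_n}) ij :
  \sum_(kd : 'I_n * 'I_n | valid_kd n kd.1 kd.2 && flipb (s * (cyc_perm n kd.1 kd.2)^-1)%g s ij)
     (kd.2%:R)^-1 * (Num.sqrt (GG R s ij) / Num.sqrt (GG R (s * (cyc_perm n kd.1 kd.2)^-1)%g ij))
  <= pi.
Proof.
rewrite (eq_bigr (fun kd : 'I_n * 'I_n => hf (GG R s ij) (eg (s * (cyc_perm n kd.1 kd.2)^-1)%g ij))); last first.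
  move=> kd /andP[hv hf].
  have hf' : flipb (s * (cyc_perm n kd.1 kd.2)^-1)%g
     ((s * (cyc_perm n kd.1 kd.2)^-1) * cyc_perm n kd.1 kd.2)%g ij by rewrite mulgKV.
  have E := e_sum hv hf'; rewrite mulgKV in E.
  by rewrite -{1}E -hf_eq addn1 addnC.
have A0 : 0 < GG R s ij by rewrite /GG ltr0n addn1.
apply: le_trans (hf_sum n A0).
apply: sum_inj_le.
- by move=> g; apply: hf_ge0; rewrite /GG ler0n.
- move=> x y /andP[hx fx] /andP[hy fy] E.
  have [k1 d1] := e_C2 hx fx; have [k2 d2] := e_C2 hy fy.
  have ek : (x.1 : nat) = y.1 by rewrite k1 k2 E.
  apply: pair_ord_inj => //.
  by rewrite d1 d2 ek.
- by move=> x _; apply: eg_lt.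
Qed.

Section Main.
Variables (R : realType) (n w : nat).
Local Notation C := R[i].
Local Notation N := (dimH n w).

Definition SR (U : nat -> 'M[C]_N) (t : nat) : R :=
  \sum_(s : {perm 'I_n}) \sum_(r : {perm 'I_n})
     weight R s r * normc (inner (psi U s t) (psi U r t)).

Lemma SR_eq U t : s_t U t = (SR U t)%:C.
Proof.
rewrite /s_t /SR rmorph_sum; apply: eq_bigr => s _.
rewrite rmorph_sum; apply: eq_bigr => r _.
by rewrite rmorphM weightC nrmE.
Qed.

Lemma normc_real (x : R) : normc (x%:C) = `|x|.
Proof. by rewrite /= expr0n /= addr0 sqrtr_sqr. Qed.

Lemma normc_revtri (a b : C) : `|normc a - normc b| <= normc (a - b).
Proof.
have h1 : normc a <= normc (a - b) + normc b by rewrite -{1}(subrK b a) le_normcD.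
have h2 : normc b <= normc (a - b) + normc a.
  have := le_normcD (b - a) a; rewrite subrK.
  by rewrite -[b - a]opprB normcN.
rewrite ler_norml; apply/andP; split; lra.
Qed.


Lemma stepB (s : {perm 'I_n}) (F : {perm 'I_n} -> R) : (forall r, 0 <= F r) ->
  \sum_r weight R s r * F r <=
  \sum_(kd : 'I_n * 'I_n | valid_kd n kd.1 kd.2) (kd.2%:R)^-1 * F (sigma_kd kd.1 kd.2 s).
Proof.
move=> F0.
apply: le_trans (_ : _ <= \sum_r (\sum_(kd : 'I_n * 'I_n | valid_kd n kd.1 kd.2 &&
     (r == sigma_kd kd.1 kd.2 s)) (kd.2%:R)^-1) * F r) _.
  by apply: ler_sum => r _; apply: ler_wpM2r => //; apply: weight_le.
under eq_bigr do rewrite mulr_suml.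
rewrite (exchange_big_dep (fun kd : 'I_n * 'I_n => valid_kd n kd.1 kd.2)) /=; last first.
  by move=> r kd _ /andP[].
apply: ler_sum => kd hv.
rewrite (big_pred1 (sigma_kd kd.1 kd.2 s)) //.
by move=> r /=; rewrite hv.
Qed.


Lemma sum_bool_mul (T : finType) (P : pred T) (b : T -> bool) (F : T -> R) :
  \sum_(x | P x) (b x)%:R * F x = \sum_(x | P x && b x) F x.
Proof.
rewrite big_mkcondr /=; apply: eq_bigr => x _.
by case: (b x); rewrite ?mul1r ?mul0r.
Qed.

Lemma swap_coef (P : pred ('I_n * 'I_n)) (f : 'I_n * 'I_n -> 'I_N -> bool)
  (c : 'I_n * 'I_n -> 'I_N -> R) (x : 'I_N -> R) :
  \sum_(kd | P kd) (kd.2%:R)^-1 * \sum_p (f kd p)%:R * (c kd p * x p) =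
  \sum_p (\sum_(kd | P kd && f kd p) (kd.2%:R)^-1 * c kd p) * x p.
Proof.
under eq_bigr do rewrite mulr_sumr.
rewrite exchange_big /=; apply: eq_bigr => p _.
rewrite mulr_suml -sum_bool_mul; apply: eq_bigr => kd _.
by rewrite mulrCA !mulrA.
Qed.

Definition lam (s r : {perm 'I_n}) (ij : 'I_n * 'I_n) : R :=
  Num.sqrt (GG R s ij) / Num.sqrt (GG R r ij).

Lemma lam_gt0 s r ij : 0 < lam s r ij.
Proof. by rewrite /lam divr_gt0 // sqrtr_gt0 /GG ltr0n addn1. Qed.

Lemma bigsum (a : {perm 'I_n} -> 'I_N -> R) :
  (forall s, \sum_p a s p ^+ 2 = 1) ->
  \sum_(s : {perm 'I_n}) \sum_(kd : 'I_n * 'I_n | valid_kd n kd.1 kd.2) (kd.2%:R)^-1 *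
    \sum_p (flipb s (s * cyc_perm n kd.1 kd.2)%g (ijof p))%:R *
      (lam s (s * cyc_perm n kd.1 kd.2)%g (ijof p) * a s p ^+ 2 +
       a (s * cyc_perm n kd.1 kd.2)%g p ^+ 2 / lam s (s * cyc_perm n kd.1 kd.2)%g (ijof p))
  <= 2 * pi * (n`!)%:R.
Proof.
move=> a1.
have Hs : \sum_(s : {perm 'I_n}) \sum_p (pi : R) * a s p ^+ 2 = pi * (n`!)%:R.
  rewrite -card_Sn -sum1_card natr_sum mulr_sumr; apply: eq_bigr => s _.
  by rewrite -mulr_sumr a1.
rewrite (eq_bigr (fun s =>
   \sum_(kd : 'I_n * 'I_n | valid_kd n kd.1 kd.2) (kd.2%:R)^-1 *
    \sum_p (flipb s (s * cyc_perm n kd.1 kd.2)%g (ijof p))%:R *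
      (lam s (s * cyc_perm n kd.1 kd.2)%g (ijof p) * a s p ^+ 2) +
   \sum_(kd : 'I_n * 'I_n | valid_kd n kd.1 kd.2) (kd.2%:R)^-1 *
    \sum_p (flipb s (s * cyc_perm n kd.1 kd.2)%g (ijof p))%:R *
      (a (s * cyc_perm n kd.1 kd.2)%g p ^+ 2 / lam s (s * cyc_perm n kd.1 kd.2)%g (ijof p))));
  last first.
  move=> s _; rewrite -big_split /=; apply: eq_bigr => kd _.
  rewrite -mulrDr -big_split /=; congr (_ * _); apply: eq_bigr => p _.
  by rewrite mulrDr.
rewrite big_split /=.
have -> : 2 * (pi : R) * (n`!)%:R = pi * (n`!)%:R + pi * (n`!)%:R by ring.
apply: lerD.
  rewrite -Hs; apply: ler_sum => s _.
  rewrite (swap_coef (fun kd => valid_kd n kd.1 kd.2)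
     (fun kd p => flipb s (s * cyc_perm n kd.1 kd.2)%g (ijof p))
     (fun kd p => lam s (s * cyc_perm n kd.1 kd.2)%g (ijof p)) (fun p => a s p ^+ 2)).
  apply: ler_sum => p _; apply: ler_wpM2r; first exact: sqr_ge0.
  exact: wcoef1.
rewrite -Hs exchange_big /=.
rewrite (eq_bigr (fun kd : 'I_n * 'I_n => \sum_(s : {perm 'I_n}) (kd.2%:R)^-1 *
    \sum_p (flipb (s * (cyc_perm n kd.1 kd.2)^-1)%g s (ijof p))%:R *
      ((lam (s * (cyc_perm n kd.1 kd.2)^-1)%g s (ijof p))^-1 * a s p ^+ 2))); last first.
  move=> kd _.
  have hinj : injective (fun s : {perm 'I_n} => (s * (cyc_perm n kd.1 kd.2)^-1)%g).
    by move=> x y /mulIg.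
  rewrite (reindex_inj hinj) /=; apply: eq_bigr => s _.
  rewrite mulgKV; congr (_ * _); apply: eq_bigr => p _.
  by congr (_ * _); rewrite mulrC.
rewrite (@exchange_big _ _ _ _ _ _ _ (fun kd : 'I_n * 'I_n => valid_kd n kd.1 kd.2)) /=; apply: ler_sum => s _.
rewrite (swap_coef (fun kd => valid_kd n kd.1 kd.2)
     (fun kd p => flipb (s * (cyc_perm n kd.1 kd.2)^-1)%g s (ijof p))
     (fun kd p => (lam (s * (cyc_perm n kd.1 kd.2)^-1)%g s (ijof p))^-1) (fun p => a s p ^+ 2)).
apply: ler_sum => p _; apply: ler_wpM2r; first exact: sqr_ge0.
rewrite /lam; under eq_bigr do rewrite invf_div.
exact: wcoef2.
Qed.


Lemma main_R (T : nat) (U : nat -> 'M[C]_N) (hn : (2 <= n)%N)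
    (hU : forall t, (t <= T)%N -> U t \is unitarymx) t (ht : (t < T)%N) :
  `|SR U t.+1 - SR U t| <= 2 * pi * (n`!)%:R.
Proof.
have n0 : (0 < n)%N by apply: leq_trans hn.
pose Dn s r := normc (inner (oracle C w s *m psi U s t) (oracle C w r *m psi U r t)
                      - inner (psi U s t) (psi U r t)).
apply: le_trans (_ : _ <= \sum_s \sum_r weight R s r * Dn s r) _.
  rewrite /SR -sumrB; apply: le_trans (ler_norm_sum _ _ _) _; apply: ler_sum => s _.
  rewrite -sumrB; apply: le_trans (ler_norm_sum _ _ _) _; apply: ler_sum => r _.
  rewrite -mulrBr normrM ger0_norm ?weight_ge0 //; apply: ler_wpM2l; first exact: weight_ge0.
  rewrite /= !inner_unitary ?hU //; exact: normc_revtri.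
apply: le_trans (_ : _ <= \sum_s \sum_(kd : 'I_n * 'I_n | valid_kd n kd.1 kd.2)
     (kd.2%:R)^-1 * Dn s (sigma_kd kd.1 kd.2 s)) _.
  by apply: ler_sum => s _; apply: stepB => r; apply: normc_ge0.
pose a s p := normc (psi U s t p 0).
apply: le_trans (bigsum (a := a) _); last first.
  by move=> s; apply: (psi_sumsq s n0 hU (ltnW ht)).
apply: ler_sum => s _; apply: ler_sum => kd _.
apply: ler_wpM2l; first by rewrite invr_ge0 ler0n.
exact: (D_bound _ _ _ _ (lam_gt0 s _)).
Qed.

End Main.

Theorem mainTheorem3 (R : realType) (n w T : nat) (hn : (2 <= n)%N)
    (U : nat -> 'M[R[i]]_(dimH n w))
    (hU : forall t, (t <= T)%N -> U t \is unitarymx) :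
  forall t : nat, (t < T)%N ->
    `| s_t U t.+1 - s_t U t | <= 2%:R * (pi : R)%:C * (n`!)%:R.
Proof.
move=> t ht.
rewrite !SR_eq -rmorphB nrmE normc_real.
have -> : 2%:R * (pi : R)%:C * (n`!)%:R = (2 * pi * (n`!)%:R)%:C.
  by rewrite !rmorphM !rmorph_nat.
  by have := main_R hn hU ht; rewrite -lecR.
Qed.
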